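(* Let $X_1,X_2$ be independent real random variables with densities $f_{X_1},f_{X_2}$ that are symmetric about their means $\mu_1,\mu_2$ and positive on all of $\mathbb{R}$, and let $\Theta$ be a $[0,1]$-valued random variable with density $\pi$, independent of $(X_1,X_2)$. Let $\psi:[0,1]\to[n]$ be any preference disclosure policy and $M=\psi(\Theta)$. Suppose the platform uses a weighted-quadratic disclosure (WQD) policy $\gamma$ with weights $w_1,\dots,w_n\in[0,1]$, let $S=\gamma(M,X_1,X_2)$ and let the signal be $Y=(S,X_S)$. Then the equilibrium estimation policy $\eta^\star$ (the Bayes-consistent estimator $\eta^\star(y,m)=(\mathbf{E}[X_1\mid M=m,Y=y],\,\mathbf{E}[X_2\mid M=m,Y=y])$, wherever these conditional expectations are defined) is $$\eta^\star(y,m)=\begin{cases}(x_1,\mu_2), & \text{if } y=(1,x_1),\\ (\mu_1,x_2), & \text{if } y=(2,x_2).\end{cases}$$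
   Context: $[n]=\{1,\dots,n\}$ for a positive integer $n$. The receiver observes $\Theta=\theta$ and sends the message $m=\psi(\theta)\in[n]$. The platform observes $(m,x_1,x_2)$ and chooses $s=\gamma(m,x_1,x_2)\in\{1,2\}$; the receiver then observes $y=(1,x_1)$ if $s=1$ and $y=(2,x_2)$ if $s=2$. A WQD policy with weights $w_1,\dots,w_n\in[0,1]$ is the policy $\gamma(m,x_1,x_2)=1$ if $w_m(x_1-\mu_1)^2>(1-w_m)(x_2-\mu_2)^2$, and $\gamma(m,x_1,x_2)=2$ otherwise. *)

(* Defs.v *)
From mathcomp Require Import all_boot all_order all_algebra.
From mathcomp Require Import all_classical all_reals all_analysis.
Import Order.TTheory GRing.Theory Num.Theory.
Import numFieldNormedType.Exports.
Set Implicit Arguments. Unset Strict Implicit. Unset Printing Implicit Defensive.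
Local Open Scope classical_set_scope.
Local Open Scope ring_scope.

Section Defs.
Context {R : realType} {d : measure_display} {T : measurableType d}.

Definition has_density (P : probability T R) (X : T -> R) (f : R -> R) : Prop :=
  forall A : set R, measurable A ->
    P (X @^-1` A) = (\int[@lebesgue_measure R]_(x in A) (f x)%:E)%E.

Definition indep2 (P : probability T R) (X Y : T -> R) : Prop :=
  forall A B : set R, measurable A -> measurable B ->
    P (X @^-1` A `&` Y @^-1` B) = (P (X @^-1` A) * P (Y @^-1` B))%E.

Definition indep_of_pair (P : probability T R) (Th X1 X2 : T -> R) : Prop :=
  forall A B C : set R, measurable A -> measurable B -> measurable C ->
    P (X1 @^-1` A `&` X2 @^-1` B `&` Th @^-1` C)
    = (P (X1 @^-1` A `&` X2 @^-1` B) * P (Th @^-1` C))%E.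

Definition wqd {n : nat} (w : 'I_n -> R) (mu1 mu2 : R) (m : 'I_n) (x1 x2 : R) : nat :=
  if (1 - w m) * (x2 - mu2) ^+ 2 < w m * (x1 - mu1) ^+ 2 then 1%N else 2%N.

Definition signal (s : nat) (x1 x2 : R) : nat * R :=
  (s, if s == 1%N then x1 else x2).

Definition eta_star {n : nat} (mu1 mu2 : R) (y : nat * R) (m : 'I_n) : R * R :=
  if y.1 == 1%N then (y.2, mu2) else (mu1, y.2).

(* g(Y, M) is a version of E[X | M, Y], where M is finite-valued and
   Y = (S, X_S) with S finite-valued: g(Y,M) is integrable and the defining
   identity E[X 1_E] = E[g(Y,M) 1_E] holds on every event
   E = {M = m, S = s, X_S in A} (these generate sigma(M, Y), and every
   event of sigma(M, Y) is a finite disjoint union of them). *)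
Definition cond_exp_version {n : nat} (P : probability T R) (X : T -> R)
    (M : T -> 'I_n) (Y : T -> nat * R) (g : nat * R -> 'I_n -> R) : Prop :=
  P.-integrable setT (EFin \o (fun t => g (Y t) (M t))) /\
  forall (m : 'I_n) (s : nat) (A : set R), measurable A ->
    let E := [set t | M t = m /\ (Y t).1 = s /\ A (Y t).2] in
    (\int[P]_(t in E) (X t)%:E = \int[P]_(t in E) (g (Y t) (M t))%:E)%E.

End Defs.

(* Main.v *)
Require Import Defs.
From HB Require Import structures.
From mathcomp Require Import all_boot all_order all_algebra.
From mathcomp Require Import all_classical all_reals all_analysis.
From mathcomp Require Import ring lra.
From mathcomp Require Import measurable_realfun.
Import Order.TTheory GRing.Theory Num.Theory.
Import numFieldNormedType.Exports.
Local Open Scope classical_set_scope.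
Local Open Scope ring_scope.
Local Notation pfm m mf := (@measure_function_pushforward__canonical__measure_function_Measure _ _ _ _ _ m _ mf).
Section S.
Context (R : realType).
Lemma mrefl0 (c : R) : measurable_fun setT (fun x : R => c - x).
Proof. by apply: measurable_realfun.measurable_funB. Qed.
Lemma mrefl (c : R) : measurable_fun (setT : set (measurableTypeR R)) ((fun x : R => c - x) : _ -> measurableTypeR R).
Proof. exact: mrefl0. Qed.
Lemma lebesgue_reflect (c : R) (A : set R) : measurable A ->
  pushforward (@lebesgue_measure R) (fun x : R => c - x) A = lebesgue_measure A.
Proof.
move=> mA; apply: esym.
have H := (@lebesgue_measure_unique R (pfm lebesgue_measure (mrefl c))).
apply: H => //.
move=> _ [[a b]] _ <-.
rewrite /= /pushforward.
have -> : (fun x : R => c - x) @^-1` `]a, b]%classic = `[c - b, c - a[%classic.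
  apply/seteqP; split => x /=; rewrite !in_itv /=.
    by move=> /andP[h1 h2]; apply/andP; split; [rewrite lerBlDr addrC -lerBlDr | rewrite ltrBrDl addrC -ltrBrDl].
  by move=> /andP[h1 h2]; apply/andP; split; [rewrite ltrBrDl addrC -ltrBrDl | rewrite lerBlDr addrC -lerBlDr].
rewrite !lebesgue_measure_itv /= !lte_fin.
have -> : (c - b < c - a) = (a < b) by rewrite ltrD2l ltrN2.
case: ifP => // _; rewrite -!EFinD; congr (_%:E); ring.
Qed.

Lemma law_refl d (T : measurableType d) (P : probability T R) (U : T -> R) (f : R -> R) (mu : R)
  (f_meas : measurable_fun setT f) (f_ge0 : forall x, 0 <= f x) (f_sym : forall t, f (mu + t) = f (mu - t))
  (dU : has_density P U f) (A : set R) (mA : measurable A) :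
  P (U @^-1` ((fun x => (mu + mu) - x) @^-1` A)) = P (U @^-1` A).
Proof.
have mrA : measurable ((fun x : R => (mu + mu) - x) @^-1` A).
  by rewrite -[X in measurable X]setTI; exact: mrefl0.
rewrite dU // dU //.
transitivity (\int[lebesgue_measure]_(x in (fun x : R => ((mu + mu) - x)%R) @^-1` A)
   ((fun y => (f y)%:E) \o (fun x : R => ((mu + mu) - x)%R)) x)%E.
  apply: eq_integral => x _ /=; congr (_%:E).
  have e1 : mu + (mu - x) = mu + mu - x by ring.
  have e2 : mu - (mu - x) = x by ring.
  by have := f_sym (mu - x); rewrite e1 e2.
rewrite -(ge0_integral_pushforward (mrefl (mu + mu))) //.
- have := (@eq_measure_integral _ (measurableTypeR R) R A lebesgue_measure (pfm lebesgue_measure (mrefl (mu + mu))) (fun y => (f y)%:E)).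
  move=> H. rewrite H //.
  move=> B mB _; exact: lebesgue_reflect.
- by apply/measurable_realfun.measurable_EFinP; exact: measurable_funTS.
- by move=> y _; rewrite lee_fin; exact: f_ge0.
Qed.

End S.

Lemma prod_measure_eq d1 d2 (T1 : measurableType d1) (T2 : measurableType d2) (R : realType)
  (m1 m2 : {measure set (T1 * T2) -> \bar R}) :
  (m1 setT < +oo)%E ->
  (forall A B, measurable A -> measurable B -> m1 (A `*` B) = m2 (A `*` B)) ->
  forall X, measurable X -> m1 X = m2 X.
Proof.
move=> m1oo m12.
pose C : set (set (T1 * T2)) :=
  [set C | exists A, measurable A /\ exists B, measurable B /\ C = A `*` B].
have CI : setI_closed C.
  move=> /= _ _ [X1 [mX1 [X2 [mX2 ->]]]] [Y1 [mY1 [Y2 [mY2 ->]]]].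
  rewrite -setXI; exists (X1 `&` Y1); split; first exact: measurableI.
  by exists (X2 `&` Y2); split => //; exact: measurableI.
move=> X mX; apply: (measure_unique C (fun n => setT)) => //.
- rewrite measurable_prod_measurableType //; congr (<<s _ >>).
  rewrite predeqE; split => [[A mA [B mB <-]]|[A [mA [B [mB ->]]]]].
    by exists A; split => //; exists B.
  by exists A => //; exists B.
- by move=> _; exists setT; split => //; exists setT; split => //; rewrite setXTT.
- by rewrite bigcup_const.
- by move=> A [A1 [mA1 [A2 [mA2 ->]]]]; exact: m12.
Qed.

Lemma mpre {d d'} {T : measurableType d} {T' : measurableType d'} {g : T -> T'} (mg : measurable_fun setT g)
  (A : set T') : measurable A -> measurable (g @^-1` A).
Proof. by move=> mA; rewrite -[X in measurable X]setTI; exact: mg. Qed.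

Section key.
Context (R : realType) d (T : measurableType d) (P : probability T R).
Variables (U V W : T -> R) (f : R -> R) (mu : R).
Hypotheses (mU : measurable_fun setT U) (mV : measurable_fun setT V) (mW : measurable_fun setT W).
Hypotheses (f_meas : measurable_fun setT f) (f_ge0 : forall x, 0 <= f x)
  (f_sym : forall t, f (mu + t) = f (mu - t)) (dU : has_density P U f)
  (iU : P.-integrable setT (EFin \o U)).
Hypothesis prod3 : forall A B C, measurable A -> measurable B -> measurable C ->
  P (U @^-1` A `&` V @^-1` B `&` W @^-1` C) = (P (U @^-1` A) * P (V @^-1` B) * P (W @^-1` C))%E.

Let rho (x : R) := mu + mu - x.
Let VW t := (V t, W t).
Let mVW : measurable_fun setT VW := measurable_fun_pair mV mW.

Lemma level1 (A : set R) (mA : measurable A) (D : set (R * R)) (mD : measurable D) :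
  P (U @^-1` A `&` VW @^-1` D) = P (U @^-1` (rho @^-1` A) `&` VW @^-1` D).
Proof.
have mrA : measurable (rho @^-1` A) by apply: mpre => //; exact: mrefl0.
pose m1 := pfm (mrestr P (mpre mU _ mA)) mVW.
pose m2 := pfm (mrestr P (mpre mU _ mrA)) mVW.
have := @prod_measure_eq _ _ _ _ R m1 m2.
rewrite /= /pushforward /mrestr => H.
rewrite (setIC (U @^-1` A)) H //.
- by rewrite (setIC (VW @^-1` D)).
- apply: (le_lt_trans (probability_le1 P _)); last exact: ltry.
  apply: measurableI; [exact: (mpre mVW) | exact: (mpre mU)].
- move=> B C mB mC.
  have -> : VW @^-1` (B `*` C) = V @^-1` B `&` W @^-1` C by [].
  rewrite (setIC (V @^-1` B `&` W @^-1` C)) setIA [in RHS](setIC (V @^-1` B `&` W @^-1` C)) setIA.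
  rewrite !prod3 //; congr (_ * _ * _)%E.
  by rewrite (@law_refl R _ _ P U f mu f_meas f_ge0 f_sym dU _ mA).
Qed.

Let Z t := (U t, VW t).
Let Z' t := (rho (U t), VW t).
Let mrho : measurable_fun setT rho := @mrefl0 R (mu + mu).
Let mZ : measurable_fun setT Z := measurable_fun_pair mU mVW.
Let mZ' : measurable_fun setT Z' := measurable_fun_pair (measurableT_comp mrho mU) mVW.

Lemma level2 X (mX : measurable X) : P (Z @^-1` X) = P (Z' @^-1` X).
Proof.
have := @prod_measure_eq _ _ _ _ R (pfm P mZ) (pfm P mZ').
rewrite /= /pushforward => H; apply: H => //.
- apply: (le_lt_trans (probability_le1 P _)); last exact: ltry.
  exact: (mpre mZ).
- move=> A D mA mD.
  have -> : Z @^-1` (A `*` D) = U @^-1` A `&` VW @^-1` D by [].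
  have -> : Z' @^-1` (A `*` D) = U @^-1` (rho @^-1` A) `&` VW @^-1` D by [].
  exact: level1.
Qed.

Lemma key (B : set (R * (R * R))) (mB : measurable B)
  (symB : forall x y, B (rho x, y) = B (x, y)) :
  (\int[P]_(t in Z @^-1` B) (U t)%:E = \int[P]_(t in Z @^-1` B) mu%:E)%E.
Proof.
pose g := fun z : R * (R * R) => (z.1 - mu)%:E.
have mg : measurable_fun setT g.
  apply/measurable_realfun.measurable_EFinP.
  apply: measurable_realfun.measurable_funB; first exact: measurable_fst.
  exact: measurable_cst.
pose F := g \_ B.
have mF : measurable_fun setT F.
  by apply/(measurable_restrictT g mB); exact: measurable_funTS.
have mE : measurable (Z @^-1` B) := mpre mZ _ mB.
have iUmu : P.-integrable setT (fun t => (U t - mu)%:E).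
  have := integrableB measurableT iU (finite_measure_integrable_cst P mu measurableT).
  by apply: eq_integrable => // t _ /=; rewrite EFinB.
have FZ : F \o Z = (fun t => (U t - mu)%:E) \_ (Z @^-1` B) by [].
have iFZ : P.-integrable setT (F \o Z).
  rewrite FZ; apply/(integrable_mkcond _ mE).
  exact: (integrableS measurableT mE (@subsetT _ _) iUmu).
have FZ' : F \o Z' = -%E \o (F \o Z).
  apply/funext => t; rewrite /F /patch /=.
  have -> : (Z' t \in B) = (Z t \in B).
    by apply/idP/idP => /set_mem h; apply/mem_set; move: h; rewrite /Z' /Z symB.
  case: ifP => _; last by rewrite oppe0.
  rewrite -EFinN /g /Z /Z' /=; congr (_%:E); rewrite /rho; ring.
have iFZ' : P.-integrable setT (F \o Z') by rewrite FZ'; exact: integrableN.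
have e1 : (\int[P]_t (F \o Z) t = \int[pfm P mZ]_(y in setT) F y)%E.
  by rewrite (integral_pushforward mZ mF iFZ measurableT).
have e2 : (\int[P]_t (F \o Z') t = \int[pfm P mZ']_(y in setT) F y)%E.
  by rewrite (integral_pushforward mZ' mF iFZ' measurableT).
have e3 : (\int[pfm P mZ]_(y in setT) F y = \int[pfm P mZ']_(y in setT) F y)%E.
  apply: eq_measure_integral => A mA _ /=; rewrite /pushforward; exact: level2.
have I0 : (\int[P]_t (F \o Z) t = 0)%E.
  have eN : (\int[P]_t (F \o Z) t = - \int[P]_t (F \o Z) t)%E.
    rewrite {1}e1 e3 -e2 FZ' /=.
    rewrite integralN //.
    apply: fin_num_adde_defl.
    rewrite fin_numN; exact: (integrable_neg_fin_num measurableT iFZ).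
  have := integrable_fin_num measurableT iFZ.
  move: eN; case: (\int[P]_t (F \o Z) t)%E => // r.
  move=> /eqP; rewrite eqe => /eqP hr _; congr (_%:E); lra.
transitivity (\int[P]_(t in Z @^-1` B) ((U t - mu)%:E + mu%:E))%E.
  by apply: eq_integral => t _; rewrite -EFinD subrK.
rewrite integralD //; last 2 first.
- exact: (integrableS measurableT mE (@subsetT _ _) iUmu).
- exact: (finite_measure_integrable_cst P mu mE).
by rewrite integral_mkcond -FZ I0 add0e.
Qed.

End key.

Lemma m_comp_psi (R : realType) (n : nat) (psi : R -> 'I_n) (h : 'I_n -> R)
  (psi_meas : forall i, measurable [set x : R | psi x = i]) :
  measurable_fun setT (fun x => h (psi x)).
Proof.
move=> _ Y mY; rewrite setTI.
have -> : (fun x => h (psi x)) @^-1` Y = \bigcup_(i in [set i | Y (h i)]) [set x | psi x = i].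
  apply/seteqP; split => [x /= Yx | x [i /= Yi hx]].
    by exists (psi x).
  by rewrite /= hx.
apply: fin_bigcup_measurable; first exact: finite_finset.
by move=> i _; exact: psi_meas.
Qed.

Theorem proposition1 (R : realType) (d : measure_display) (T : measurableType d)
  (P : probability T R) (n : nat) (hn : (0 < n)%N)
  (X1 X2 Th : T -> R) (f1 f2 pi : R -> R) (mu1 mu2 : R)
  (psi : R -> 'I_n) (w : 'I_n -> R)
  (mX1 : measurable_fun setT X1) (mX2 : measurable_fun setT X2)
  (mTh : measurable_fun setT Th)
  (f1_meas : measurable_fun setT f1) (f2_meas : measurable_fun setT f2)
  (pi_meas : measurable_fun setT pi)
  (f1_pos : forall x, 0 < f1 x) (f2_pos : forall x, 0 < f2 x)
  (pi_ge0 : forall x, 0 <= pi x)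
  (f1_sym : forall t, f1 (mu1 + t) = f1 (mu1 - t))
  (f2_sym : forall t, f2 (mu2 + t) = f2 (mu2 - t))
  (dX1 : has_density P X1 f1) (dX2 : has_density P X2 f2)
  (dTh : has_density P Th pi)
  (iX1 : P.-integrable setT (EFin \o X1)) (iX2 : P.-integrable setT (EFin \o X2))
  (meanX1 : (\int[P]_t (X1 t)%:E = mu1%:E)%E)
  (meanX2 : (\int[P]_t (X2 t)%:E = mu2%:E)%E)
  (Th01 : forall t, 0 <= Th t <= 1)
  (indX : indep2 P X1 X2) (indTh : indep_of_pair P Th X1 X2)
  (psi_meas : forall i : 'I_n, measurable [set x : R | psi x = i])
  (w01 : forall i, 0 <= w i <= 1) :
  let M := fun t => psi (Th t) in
  let S := fun t => wqd w mu1 mu2 (M t) (X1 t) (X2 t) in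
  let Y := fun t => signal (S t) (X1 t) (X2 t) in
  cond_exp_version P X1 M Y (fun y m => (eta_star mu1 mu2 y m).1) /\
  cond_exp_version P X2 M Y (fun y m => (eta_star mu1 mu2 y m).2).
Proof.
move=> M S Y.
have mwM : measurable_fun setT (fun t => w (M t)).
  exact: (measurableT_comp (@m_comp_psi R n psi w psi_meas) mTh).
pose c t := ((1 - w (M t)) * (X2 t - mu2) ^+ 2 < w (M t) * (X1 t - mu1) ^+ 2).
have mcf : measurable_fun setT c.
  apply: measurable_fun_ltr.
    apply: measurable_funM.
      by apply: measurable_funB => //; exact: measurable_cst.
    by apply: measurable_funX; apply: measurable_funB => //; exact: measurable_cst.
  apply: measurable_funM => //.
  by apply: measurable_funX; apply: measurable_funB => //; exact: measurable_cst.
have mc : measurable [set t | c t].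
  by have := mpre mcf [set true] I.
have ST t : S t = if c t then 1%N else 2%N by [].
have prod3_1 : forall A B C, measurable A -> measurable B -> measurable C ->
    P (X1 @^-1` A `&` X2 @^-1` B `&` Th @^-1` C) =
    (P (X1 @^-1` A) * P (X2 @^-1` B) * P (Th @^-1` C))%E.
  by move=> A B C mA mB mC; rewrite indTh // indX.
have prod3_2 : forall A B C, measurable A -> measurable B -> measurable C ->
    P (X2 @^-1` A `&` X1 @^-1` B `&` Th @^-1` C) =
    (P (X2 @^-1` A) * P (X1 @^-1` B) * P (Th @^-1` C))%E.
  move=> A B C mA mB mC; rewrite (setIC (X2 @^-1` A)) indTh // indX //.
  by rewrite (muleC (P (X1 @^-1` B))).
have f1_ge0 x : 0 <= f1 x by exact: ltW.
have f2_ge0 x : 0 <= f2 x by exact: ltW.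
have iX1m : P.-integrable setT (fun t => (X1 t - mu1)%:E).
  have := integrableB measurableT iX1 (finite_measure_integrable_cst P mu1 measurableT).
  by apply: eq_integrable => // t _ /=; rewrite EFinB.
have iX2m : P.-integrable setT (fun t => (X2 t - mu2)%:E).
  have := integrableB measurableT iX2 (finite_measure_integrable_cst P mu2 measurableT).
  by apply: eq_integrable => // t _ /=; rewrite EFinB.
have mfst2 : measurable_fun setT (fun z : R * (R * R) => z.2.1).
  exact: (measurableT_comp measurable_fst measurable_snd).
have msnd2 : measurable_fun setT (fun z : R * (R * R) => z.2.2).
  exact: (measurableT_comp measurable_snd measurable_snd).
have mfst1 : measurable_fun setT (fun z : R * (R * R) => z.1) by exact: measurable_fst.
split; split.
- apply: (eq_integrable measurableT (fun t => ((fun t => (X1 t - mu1)%:E) \_ [set t | c t]) t + mu1%:E)).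
    move=> t _; rewrite /= /eta_star /Y /signal /= ST /patch.
    case: (boolP (c t)) => ct.
      by rewrite mem_set //= -EFinD subrK.
    by rewrite memNset /= ?add0e //; apply/negP.
  apply: integrableD => //; last exact: (finite_measure_integrable_cst P mu1 measurableT).
  apply/(integrable_mkcond _ mc).
  exact: (integrableS measurableT mc (@subsetT _ _) iX1m).
- move=> m s A mA E; rewrite /E; clear E.
  have [->|s1] := eqVneq s 1%N.
    apply: eq_integral => t /set_mem [_ [hs _]].
    have hS : S t = 1%N := hs.
    by rewrite /eta_star hs /= /Y /signal hS.
  have [->|s2] := eqVneq s 2%N; last first.
    have -> : [set t | M t = m /\ (Y t).1 = s /\ A (Y t).2] = set0.
      apply/seteqP; split => t //= [_ [hs _]].
      move: hs; rewrite /Y /signal /= ST; case: (c t) => hs.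
        by move: s1; rewrite -hs eqxx.
      by move: s2; rewrite -hs eqxx.
    by rewrite !integral_set0.
  pose cz (z : R * (R * R)) := ((1 - w m) * (z.2.1 - mu2) ^+ 2 < w m * (z.1 - mu1) ^+ 2).
  have mcz : measurable_fun setT cz.
    apply: measurable_fun_ltr.
      apply: measurable_funM; first exact: measurable_cst.
      by apply: measurable_funX; apply: measurable_funB => //; exact: measurable_cst.
    apply: measurable_funM; first exact: measurable_cst.
    by apply: measurable_funX; apply: measurable_funB => //; exact: measurable_cst.
  pose B := ((fun z : R * (R * R) => z.2.2) @^-1` [set x | psi x = m]) `&`
            (cz @^-1` [set false]) `&` ((fun z : R * (R * R) => z.2.1) @^-1` A).
  have mB : measurable B.
    apply: measurableI; [apply: measurableI|].
    - exact: (mpre msnd2 _ (psi_meas m)).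
    - exact: (mpre mcz [set false] I).
    - exact: (mpre mfst2 _ mA).
  have symB : forall x y, B ((fun x0 : R => mu1 + mu1 - x0) x, y) = B (x, y).
    move=> x y; rewrite /B /cz /=.
    by have -> : (mu1 + mu1 - x - mu1) ^+ 2 = (x - mu1) ^+ 2 by ring.
  have hE : [set t | M t = m /\ (Y t).1 = 2%N /\ A (Y t).2] = (fun t => (X1 t, (fun t0 => (X2 t0, Th t0)) t)) @^-1` B.
    apply/seteqP; split => t /=.
      move=> [hm [hs hA]].
      have hc : c t = false.
        by move: hs; rewrite /Y /signal /= ST; case: (c t).
      split; [split|].
      + exact: hm.
      + by rewrite /cz /= -hm.
      + by move: hA; rewrite /Y /signal /= ST hc.
    move=> [[hm hc] hA].
    have hc' : c t = false by rewrite /c /M hm.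
    split; first exact: hm.
    by rewrite /Y /signal /= ST hc'.
  rewrite hE (@key R d T P X1 X2 Th f1 mu1 mX1 mX2 mTh f1_meas f1_ge0 f1_sym dX1 iX1 prod3_1 B mB symB).
  apply: eq_integral => t /set_mem [[hm hc] hA].
  have hc' : c t = false by rewrite /c /M hm.
  by rewrite /eta_star /Y /signal /= ST hc'.
- apply: (eq_integrable measurableT (fun t => ((fun t => (X2 t - mu2)%:E) \_ (~` [set t | c t])) t + mu2%:E)).
    move=> t _; rewrite /= /eta_star /Y /signal /= ST /patch.
    case: (boolP (c t)) => ct.
      by rewrite memNset /= ?add0e // => /(_ ct).
    by rewrite mem_set /= -?EFinD ?subrK //; apply/negP.
  apply: integrableD => //; last exact: (finite_measure_integrable_cst P mu2 measurableT).
  apply/(integrable_mkcond _ (measurableC mc)).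
  exact: (integrableS measurableT (measurableC mc) (@subsetT _ _) iX2m).
- move=> m s A mA E; rewrite /E; clear E.
  have [->|s2] := eqVneq s 2%N.
    apply: eq_integral => t /set_mem [_ [hs _]].
    have hS : S t = 2%N := hs.
    by rewrite /eta_star hs /= /Y /signal hS.
  have [->|s1] := eqVneq s 1%N; last first.
    have -> : [set t | M t = m /\ (Y t).1 = s /\ A (Y t).2] = set0.
      apply/seteqP; split => t //= [_ [hs _]].
      move: hs; rewrite /Y /signal /= ST; case: (c t) => hs.
        by move: s1; rewrite -hs eqxx.
      by move: s2; rewrite -hs eqxx.
    by rewrite !integral_set0.
  pose cz (z : R * (R * R)) := ((1 - w m) * (z.1 - mu2) ^+ 2 < w m * (z.2.1 - mu1) ^+ 2).
  have mcz : measurable_fun setT cz.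
    apply: measurable_fun_ltr.
      apply: measurable_funM; first exact: measurable_cst.
      by apply: measurable_funX; apply: measurable_funB => //; exact: measurable_cst.
    apply: measurable_funM; first exact: measurable_cst.
    by apply: measurable_funX; apply: measurable_funB => //; exact: measurable_cst.
  pose B := ((fun z : R * (R * R) => z.2.2) @^-1` [set x | psi x = m]) `&`
            (cz @^-1` [set true]) `&` ((fun z : R * (R * R) => z.2.1) @^-1` A).
  have mB : measurable B.
    apply: measurableI; [apply: measurableI|].
    - exact: (mpre msnd2 _ (psi_meas m)).
    - exact: (mpre mcz [set true] I).
    - exact: (mpre mfst2 _ mA).
  have symB : forall x y, B ((fun x0 : R => mu2 + mu2 - x0) x, y) = B (x, y).
    move=> x y; rewrite /B /cz /=.
    by have -> : (mu2 + mu2 - x - mu2) ^+ 2 = (x - mu2) ^+ 2 by ring.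
  have hE : [set t | M t = m /\ (Y t).1 = 1%N /\ A (Y t).2] =
      (fun t => (X2 t, (fun t0 => (X1 t0, Th t0)) t)) @^-1` B.
    apply/seteqP; split => t /=.
      move=> [hm [hs hA]].
      have hc : c t = true.
        by move: hs; rewrite /Y /signal /= ST; case: (c t).
      split; [split|].
      + exact: hm.
      + by rewrite /cz /= -hm.
      + by move: hA; rewrite /Y /signal /= ST hc.
    move=> [[hm hc] hA].
    have hc' : c t = true by rewrite /c /M hm.
    split; first exact: hm.
    by rewrite /Y /signal /= ST hc'.
  rewrite hE (@key R d T P X2 X1 Th f2 mu2 mX2 mX1 mTh f2_meas f2_ge0 f2_sym dX2 iX2 prod3_2 B mB symB).
  apply: eq_integral => t /set_mem [[hm hc] hA].
  have hc' : c t = true by rewrite /c /M hm.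
  by rewrite /eta_star /Y /signal /= ST hc'.
Qed.
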